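(* Let $q\geq2$ and $0<\alpha<1/q$. A randomized Anti-$q$-SG algorithm which on every input of length $n$ incurs an expected cost of at most $\alpha n$ must read at least $$b\geq K_{1/q}(\alpha)\,n=(1-h_q(1-\alpha))\,n\log_2 q$$ bits of advice.
   Context: Anti-$q$-SG (anti-string guessing) is the repeated matrix game with the $q\times q$ identity cost matrix: inputs $(n,x_1,\dots,x_n)$ with $x_i\in[q]$; in round $i$ the algorithm knows $n,x_1,\dots,x_{i-1}$ and outputs $y_i\in[q]$, paying $1$ if $y_i=x_i$ and $0$ otherwise; $n$ is the length. Advice is read from an infinite tape prepared by an oracle knowing the input; a randomized algorithm with advice is a probability distribution over deterministic algorithms with advice. $K_y(x)=x\log_2(x/y)+(1-x)\log_2((1-x)/(1-y))$; $h_q(x)=x\log_q(q-1)-x\log_qx-(1-x)\log_q(1-x)$. *)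

(* Defs.v *)
From HB Require Import structures.
From mathcomp Require Import all_boot all_order all_algebra.
From mathcomp Require Import all_classical all_reals all_analysis.
Set Implicit Arguments. Unset Strict Implicit. Unset Printing Implicit Defensive.
Import Order.TTheory GRing.Theory Num.Theory.
Local Open Scope ring_scope.

Definition tape := nat -> bool.

(** A deterministic Anti-q-SG algorithm with advice: in round i (0-indexed)
    it knows n, the history x_1..x_i-1 (a seq of length i) and has access
    to the advice tape, and outputs y in [q] = 'I_q.  The oracle (which
    knows the whole input) prepares the tape. *)
Record detalg (q : nat) := DetAlg {
  alg_out : nat -> seq 'I_q -> tape -> 'I_q;
  alg_oracle : seq 'I_q -> tape }.

Definition out_round (q : nat) (D : detalg q) (x : seq 'I_q) (i : nat) : 'I_q :=
  alg_out D (size x) (take i x) (alg_oracle D x).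

Definition cost (q : nat) (D : detalg q) (x : seq 'I_q) : nat :=
  (\sum_(i < size x) (out_round D x i == tnth (in_tuple x) i))%N.

(** D reads at most b advice bits on input x: its behaviour on x only
    depends on the first b bits of the tape written by the oracle. *)
Definition reads_at_most (q : nat) (D : detalg q) (x : seq 'I_q) (b : nat) : Prop :=
  forall t : tape, (forall j, (j < b)%N -> t j = alg_oracle D x j) ->
  forall i, (i < size x)%N ->
    alg_out D (size x) (take i x) t = alg_out D (size x) (take i x) (alg_oracle D x).

Definition log2 {R : realType} (x : R) : R := ln x / ln 2.
Definition logb {R : realType} (a x : R) : R := ln x / ln a.

Definition KL {R : realType} (y x : R) : R :=
  x * log2 (x / y) + (1 - x) * log2 ((1 - x) / (1 - y)).

Definition hq {R : realType} (q : nat) (x : R) : R :=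
  x * logb q%:R (q%:R - 1) - x * logb q%:R x - (1 - x) * logb q%:R (1 - x).

(* Main.v *)
Require Import Defs.
From HB Require Import structures.
From mathcomp Require Import all_boot all_order all_algebra.
From mathcomp Require Import all_classical all_reals all_analysis.
From mathcomp Require Import ring lra measurable_realfun.
Import Order.TTheory GRing.Theory Num.Theory.
Local Open Scope ring_scope.

Section Comb.
Variable T : finType.

Fixpoint allseqs (n : nat) : seq (seq T) :=
  if n is n'.+1 then [seq a :: t | a <- enum T, t <- allseqs n'] else [:: [::]].

Lemma mem_allseqs n x : (x \in allseqs n) = (size x == n).
Proof.
elim: n x => [|n IH] [|a x] //=; rewrite ?mem_seq1 //.
  by apply/allpairsP => [[p [_ _]]].
apply/allpairsP/idP.
  move=> [[a' t] /= [_ Ht [_ ->]]]; by rewrite eqSS -(IH t).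
move=> Hs; exists (a, x) => /=; split => //; first by rewrite mem_enum.
by rewrite IH.
Qed.

Fixpoint rcost (f : seq T -> T) (x : seq T) : nat :=
  match x with [::] => 0%N | a :: x' => ((f [::] == a) + rcost (fun p => f (a :: p)) x')%N end.

Lemma rcostE (f : seq T -> T) x x0 :
  (\sum_(i < size x) (f (take i x) == nth x0 x i))%N = rcost f x.
Proof.
elim: x f => [|a x IH] f /=; first by rewrite big_ord0.
rewrite big_ord_recl /= -(IH (fun p => f (a :: p))).
by [].
Qed.

Lemma sum_one_hot (R : numDomainType) (th : R) (c : T) :
  \sum_(a <- enum T) th ^+ (c == a) = th + (#|T|.-1)%:R.
Proof.
rewrite big_enum /= (bigD1 c) //= eqxx expr1; congr (_ + _).
rewrite (eq_bigr (fun _ => 1)); last by move=> i; rewrite eq_sym => /negbTE ->.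
rewrite sumr_const cardC1 //.
Qed.

Lemma sum_allseqs (R : numDomainType) (th : R) n (f : seq T -> T) :
  \sum_(x <- allseqs n) th ^+ (rcost f x) = (th + (#|T|.-1)%:R) ^+ n.
Proof.
elim: n f => [|n IH] f /=; first by rewrite big_seq1 expr0.
rewrite big_allpairs_dep /=.
transitivity (\sum_(a <- enum T) th ^+ (f [::] == a) * (th + (#|T|.-1)%:R) ^+ n).
  apply: eq_bigr => a _; rewrite -(IH (fun p => f (a :: p))) big_distrr /=.
  by apply: eq_bigr => t _; rewrite exprD.
by rewrite -big_distrl /= sum_one_hot exprS.
Qed.

Lemma count_allseqs (R : numDomainType) n :
  \sum_(x <- allseqs n) (1 : R) = (#|T| ^ n)%:R.
Proof.
elim: n => [|n IH] /=; first by rewrite big_seq1.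
rewrite big_allpairs_dep /= (eq_bigr (fun _ => (#|T| ^ n)%:R)) //.
by rewrite big_enum /= sumr_const expnS natrM mulr_natl.
Qed.
End Comb.
Arguments rcost {T}.
Arguments rcostE {T}.

Lemma cost_rcost q (D : detalg q) x (x0 : 'I_q) b : reads_at_most D x b ->
  cost D x = rcost (fun pre => alg_out D (size x) pre
                    (fun j => nth false (mkseq (alg_oracle D x) b) j)) x.
Proof.
move=> H; rewrite /cost -(@rcostE _ _ _ x0); apply: eq_bigr => i _.
rewrite /out_round (tnth_nth x0) /= (H (fun j => nth false (mkseq (alg_oracle D x) b) j)) ?ltn_ord //.
by move=> j hj; rewrite nth_mkseq.
Qed.

Lemma lnM' (R : realType) (x y : R) : 0 < x -> 0 < y -> ln (x * y) = ln x + ln y.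
Proof. by move=> hx hy; rewrite lnM // posrE. Qed.

Lemma lnV' (R : realType) (x : R) : 0 < x -> ln (x^-1) = - ln x.
Proof. by move=> hx; rewrite lnV // posrE. Qed.

Theorem theorem10 (R : realType) (q : nat) (alpha : R) (n : nat)
  (d : measure_display) (T : measurableType d) (P : probability T R)
  (A : T -> detalg q) (b : nat) :
  (2 <= q)%N -> 0 < alpha -> alpha < 1 / q%:R ->
  (forall x : seq 'I_q, size x = n ->
     measurable_fun setT (fun w => (cost (A w) x)%:R : R)) ->
  (forall x : seq 'I_q, size x = n ->
     (\int[P]_w ((cost (A w) x)%:R)%:E <= (alpha * n%:R)%:E)%E) ->
  (forall w (x : seq 'I_q), size x = n -> reads_at_most (A w) x b) ->
  KL (1 / q%:R) alpha * n%:R <= b%:R /\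
  KL (1 / q%:R) alpha * n%:R = (1 - hq q (1 - alpha)) * n%:R * log2 q%:R.
Proof.
move=> hq ha haq Hmeas Hint Hread.
have q0 : (0 < q)%N by apply: leq_trans hq.
pose x0 : 'I_q := Ordinal q0.
set Rq : R := q%:R.
have Rq2 : 2 <= Rq by rewrite /Rq ler_nat.
have a1 : alpha * Rq < 1.
  by move: haq; rewrite ltr_pdivlMr /Rq ?ltr0n.
have a1' : alpha < 1 by nra.
have b0 : 0 < 1 - alpha by lra.
have q10 : 0 < Rq - 1 by lra.
have Rq0 : 0 < Rq by lra.
have Epred : (q.-1)%:R = Rq - 1 :> R by rewrite -subn1 natrB // ltnW.
set th : R := alpha * (Rq - 1) / (1 - alpha).
have th0 : 0 < th by apply: divr_gt0 => //; apply: mulr_gt0.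
have th1 : th < 1 by rewrite /th ltr_pdivrMr //; nra.
set lam := ln th.
have lam0 : lam < 0 by apply: ln_lt0; rewrite th0 th1.
set L := allseqs 'I_q n.
set Pb := allseqs bool b.
set N : R := \sum_(x <- L) 1.
have EN : N = Rq ^+ n by rewrite /N count_allseqs card_ord natrX.
set M : R := (2 ^ b)%:R * (th + (q.-1)%:R) ^+ n.
set E0 := expR (lam * (alpha * n%:R)).
have E00 : 0 < E0 by apply: expR_gt0.
set C := fun w => \sum_(x <- L) ((cost (A w) x)%:R : R).
have HG : forall w, \sum_(x <- L) th ^+ cost (A w) x <= M.
  move=> w.
  pose f p := fun pre => alg_out (A w) n pre (fun j => nth false p j).
  apply: (@le_trans _ _ (\sum_(x <- L) \sum_(p <- Pb) th ^+ rcost (f p) x)).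
    rewrite big_seq [X in _ <= X]big_seq; apply: ler_sum => x; rewrite mem_allseqs => /eqP sx.
    have hp : mkseq (alg_oracle (A w) x) b \in Pb by rewrite mem_allseqs size_mkseq.
    rewrite (big_rem _ hp) /= (@cost_rcost _ _ _ x0 _ (Hread w x sx)) sx.
    rewrite lerDl; apply: sumr_ge0 => p _; apply: exprn_ge0; lra.
  rewrite exchange_big /= (eq_bigr (fun _ => (th + (#|'I_q|.-1)%:R) ^+ n)); last first.
    by move=> p _; rewrite sum_allseqs.
  have -> : \sum_(p <- Pb) (th + (#|'I_q|.-1)%:R) ^+ n
            = (\sum_(p <- Pb) 1) * (th + (#|'I_q|.-1)%:R) ^+ n.
    by rewrite big_distrl /=; apply: eq_bigr => *; rewrite mul1r.
  by rewrite count_allseqs card_ord card_bool.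
have eth : th = expR lam by rewrite /lam lnK // posrE.
have Htan : forall c : nat, E0 * (1 + lam * (c%:R - alpha * n%:R)) <= th ^+ c.
  move=> c.
  have -> : th ^+ c = E0 * expR (lam * (c%:R - alpha * n%:R)).
    rewrite /E0 -expRD {1}eth -expRM_natl; congr expR; ring.
  by apply: ler_wpM2l; [exact: ltW | exact: expR_ge1Dx].
have Hsum : forall w, E0 * (N + lam * (C w - N * (alpha * n%:R))) <= M.
  move=> w; apply: le_trans (HG w).
  have -> : E0 * (N + lam * (C w - N * (alpha * n%:R))) =
      \sum_(x <- L) E0 * (1 + lam * ((cost (A w) x)%:R - alpha * n%:R)).
    rewrite -big_distrr /= big_split /= -big_distrr /= sumrB /N /C big_distrl /=.
    by congr (_ * (_ + _ * (_ - _))); apply: eq_bigr => *; rewrite mul1r.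
  by apply: ler_sum => x _; exact: Htan.
set K := N * (alpha * n%:R) + (N - M / E0) / (- lam).
have HK : forall w, K <= C w.
  move=> w; have := Hsum w; rewrite -ler_pdivlMl // => H.
  rewrite /K -lerBrDl ler_pdivrMr; last lra.
  rewrite mulrC in H; nra.
pose F (x : seq 'I_q) (w : T) : \bar R :=
  if size x == n then ((cost (A w) x)%:R)%:E else 0%E.
have mF : forall x, measurable_fun setT (F x).
  move=> x; rewrite /F; case: eqP => h; last exact: measurable_cst.
  by apply/measurable_EFinP; exact: Hmeas.
have F0 : forall x w, setT w -> (0 <= F x w)%E.
  by move=> x w _; rewrite /F; case: eqP => _ //; rewrite lee_fin.
have HI : (\int[P]_w (\sum_(x <- L) F x w) <= (N * (alpha * n%:R))%:E)%E.
  rewrite ge0_integral_sum //.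
  have -> : N * (alpha * n%:R) = \sum_(x <- L) (alpha * n%:R).
    by rewrite /N big_distrl /=; apply: eq_bigr => *; rewrite mul1r.
  rewrite -sumEFin big_seq [X in (_ <= X)%E]big_seq; apply: lee_sum => x.
  rewrite mem_allseqs => hx; rewrite /F hx; exact: Hint (eqP hx).
have Kle : K <= N * (alpha * n%:R).
  case: (leP K 0) => hK0.
    apply: le_trans hK0 _; apply: mulr_ge0; last by apply: mulr_ge0; [lra | exact: ler0n].
    by rewrite EN; apply: exprn_ge0; lra.
  rewrite -lee_fin; apply: le_trans HI.
  have <- : (\int[P]_w (cst K%:E w) = K%:E)%E.
    rewrite integral_cst // -[RHS]mule1; congr (_ * _)%E; exact: probability_setT.
  apply: ge0_le_integral => //.
  all: try (by move=> w _; rewrite lee_fin ltW).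
  all: try (by apply: emeasurable_sum => x; exact: mF).
  all: try exact: measurable_cst.
  move=> w _ /=.
  rewrite big_seq (eq_bigr (fun x => ((cost (A w) x)%:R)%:E)); last first.
    by move=> x; rewrite mem_allseqs /F => ->.
  by rewrite -big_seq sumEFin lee_fin; exact: HK.
have NM : N * E0 <= M.
  move: Kle; rewrite /K -lerBrDl subrr ler_pdivrMr; last lra.
  by rewrite mul0r subr_le0 ler_pdivlMr.
have l2 : 0 < ln (2:R) by apply: ln_gt0; lra.
have lq0 : 0 < ln Rq by apply: ln_gt0; lra.
have nb : 1 - alpha != 0 by rewrite gt_eqF.
have nq : Rq != 0 by rewrite gt_eqF.
have nq1 : Rq - 1 != 0 by rewrite gt_eqF.
have Elam : lam = ln alpha + ln (Rq - 1) - ln (1 - alpha).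
  have ha1 : 0 < alpha * (Rq - 1) by apply: mulr_gt0.
  have hb1 : 0 < (1 - alpha)^-1 by rewrite invr_gt0.
  rewrite /lam /th (@lnM' _ _ _ ha1 hb1) (@lnV' _ _ b0) (@lnM' _ _ _ ha q10).
  by [].
have Eth : th + (q.-1)%:R = (Rq - 1) * (1 - alpha)^-1.
  by rewrite Epred /th; field.
have N0 : 0 < N by rewrite EN exprn_gt0.
have M0 : 0 < M.
  by rewrite /M mulr_gt0 // ?ltr0n ?expn_gt0 // Eth exprn_gt0 // mulr_gt0 // invr_gt0.
have HL : ln (N * E0) <= ln M by rewrite ler_ln // posrE ?mulr_gt0.
have LN : ln N = n%:R * ln Rq by rewrite EN lnXn // mulr_natl.
have h2 : 0 < (2:R) by lra.
have hT : 0 < th + (q.-1)%:R by rewrite Eth divr_gt0 // invr_gt0.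
have hb' : 0 < (1 - alpha)^-1 by rewrite invr_gt0.
have hT' : 0 < (Rq - 1) * (1 - alpha)^-1 by rewrite -Eth.
have LM : ln M = b%:R * ln 2 + n%:R * (ln (Rq-1) - ln (1-alpha)).
  rewrite /M natrX (@lnM' _ _ _ (exprn_gt0 b h2) (exprn_gt0 n hT)).
  rewrite (lnXn b h2) Eth (lnXn n hT') (@lnM' _ _ _ q10 hb') (@lnV' _ _ b0).
  by rewrite !mulr_natl.
have LE : ln (N * E0) = ln N + lam * (alpha * n%:R) by rewrite lnM' // /E0 expRK.
have HL' : n%:R * ln Rq + (ln alpha + ln (Rq - 1) - ln (1 - alpha)) * (alpha * n%:R)
    <= b%:R * ln 2 + n%:R * (ln (Rq - 1) - ln (1 - alpha)).
  by rewrite -LM -Elam -LN -LE.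
have E1 : alpha / (1 / Rq) = alpha * Rq by field.
have E2 : (1 - alpha) / (1 - 1 / Rq) = (1 - alpha) * (Rq * (Rq - 1)^-1).
  by field; apply/andP; split.
have EKL : KL (1 / Rq) alpha = (alpha * (ln alpha + ln Rq)
     + (1 - alpha) * (ln (1 - alpha) + (ln Rq - ln (Rq - 1)))) / ln 2.
  have hq1 : 0 < (Rq - 1)^-1 by rewrite invr_gt0.
  have hq2 : 0 < Rq * (Rq - 1)^-1 by apply: mulr_gt0.
  rewrite /KL /log2 E1 E2 (@lnM' _ _ _ ha Rq0) (@lnM' _ _ _ b0 hq2) (@lnM' _ _ _ Rq0 hq1).
  rewrite (@lnV' _ _ q10).
  by field; rewrite gt_eqF.
split.
  rewrite EKL mulrAC ler_pdivrMr //.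
  set X := _ * n%:R; set Y := b%:R * ln 2.
  have -> : X = n%:R * ln Rq + (ln alpha + ln (Rq - 1) - ln (1 - alpha)) * (alpha * n%:R)
      - n%:R * (ln (Rq - 1) - ln (1 - alpha)) by rewrite /X; ring.
  rewrite lerBlDr; exact: HL'.
rewrite EKL /Defs.hq /logb /log2 (_ : 1 - (1 - alpha) = alpha); last by ring.
by field; rewrite !gt_eqF.
Qed.
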